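(* Let $q$ be even and $\mu\in\mathbb F_q^*\setminus\{1\}$. Then $N_1(\mu)=\#\{\gamma\in\mathbb F_q^*:\mathrm{Tr}_2(\delta_{\mu,\gamma})=1\}$ and $\widetilde N_1(\mu)=\#\{c\in\mathbb F_q^*:\mathrm{Tr}_2(\widetilde\delta_{\mu,c})=1\}$, where $\delta_{\mu,\gamma}=\dfrac{\mu^3+\gamma^4}{\gamma^2(\mu+1)^2}+\dfrac1{\mu+1}$ and $\widetilde\delta_{\mu,c}=\dfrac{1+\mu c^4}{c^2(\mu+1)^2}+\dfrac{\mu}{\mu+1}$.
   Context: $\mathrm{Tr}_2$ denotes the absolute trace $\mathbb F_q\to\mathbb F_2$. $N_1(\mu)$ is the number of $\gamma\in\mathbb F_q$ such that $t^3+\gamma t^2+\mu t+\gamma=0$ has exactly one solution $t\in\mathbb F_q$; $\widetilde N_1(\mu)$ is the number of $c\in\mathbb F_q^*$ such that $t^3+ct^2+t+\mu c=0$ has exactly one solution $t\in\mathbb F_q$. *)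

(* Defs.v *)
From mathcomp Require Import all_boot all_order all_algebra all_field.
Set Implicit Arguments. Unset Strict Implicit. Unset Printing Implicit Defensive.
Import GRing.Theory.
Local Open Scope ring_scope.

Definition Tr2 (F : finFieldType) (x : F) : F :=
  \sum_(i < logn 2 #|F|) x ^+ (2 ^ i).

Definition N1 (F : finFieldType) (mu : F) : nat :=
  #|[set gamma : F |
      #|[set t : F | t ^+ 3 + gamma * t ^+ 2 + mu * t + gamma == 0]| == 1%N]|.

Definition N1t (F : finFieldType) (mu : F) : nat :=
  #|[set c : F | (c != 0) &&
      (#|[set t : F | t ^+ 3 + c * t ^+ 2 + t + mu * c == 0]| == 1%N)]|.

Definition delta (F : finFieldType) (mu gamma : F) : F :=
  (mu ^+ 3 + gamma ^+ 4) / (gamma ^+ 2 * (mu + 1) ^+ 2) + (mu + 1)^-1.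

Definition deltat (F : finFieldType) (mu c : F) : F :=
  (1 + mu * c ^+ 4) / (c ^+ 2 * (mu + 1) ^+ 2) + mu / (mu + 1).

(* Main.v *)
Require Import Defs.
From mathcomp Require Import all_boot all_order all_algebra all_field.
From mathcomp Require Import ring.
Set Implicit Arguments. Unset Strict Implicit. Unset Printing Implicit Defensive.
Import GRing.Theory.
Local Open Scope ring_scope.

Section Trace.
Variable F : finFieldType.
Hypothesis H2 : 2%N \in [pchar F].
Local Notation n := (logn 2 #|F|).

Lemma cardF : #|F| = (2 ^ n)%N.
Proof. exact: (card_pprimeChar H2). Qed.

Lemma n_gt0 : (0 < n)%N.
Proof.
have h1 : (1 < #|F|)%N by apply/card_gt1P; exists 0, 1; rewrite eq_sym oner_neq0.
have := cardF; case: (logn 2 #|F|) => // h; by move: h1; rewrite h.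
Qed.

Lemma sqrD (x y : F) : (x + y) ^+ 2 = x ^+ 2 + y ^+ 2.
Proof. by rewrite sqrrD mulr2n addrr_pchar2 // addr0. Qed.

Lemma pow2D i (x y : F) : (x + y) ^+ (2 ^ i) = x ^+ (2 ^ i) + y ^+ (2 ^ i).
Proof.
elim: i => [|i IH]; first by rewrite !expn0 !expr1.
by rewrite expnSr !exprM IH sqrD.
Qed.

Lemma TrD (x y : F) : Tr2 (x + y) = Tr2 x + Tr2 y.
Proof. by rewrite /Tr2 -big_split; apply: eq_bigr => i _; rewrite pow2D. Qed.

Lemma Tr0 : Tr2 (0 : F) = 0.
Proof. by rewrite /Tr2 big1 // => i _; rewrite expr0n expn_eq0. Qed.

Lemma Tr_sq (x : F) : Tr2 (x ^+ 2) = Tr2 x.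
Proof.
rewrite /Tr2; have := n_gt0; case: (logn 2 #|F|) (cardF) => // m hc _.
rewrite big_ord_recr big_ord_recl /=.
have -> : (x ^+ 2) ^+ (2 ^ m) = x ^+ (2 ^ 0).
  by rewrite -exprM -expnS -hc expf_card expn0 expr1.
rewrite addrC; congr (_ + _); apply: eq_bigr => i _.
by rewrite -exprM /= -expnS.
Qed.

Lemma Tr_sqadd (y : F) : Tr2 (y ^+ 2 + y) = 0.
Proof. by rewrite TrD Tr_sq addrr_pchar2. Qed.

Lemma Tr_sqr (x : F) : Tr2 x ^+ 2 = Tr2 x.
Proof.
rewrite -[in RHS]Tr_sq /Tr2.
rewrite (big_morph (fun z : F => z ^+ 2) sqrD (@expr0n F 2)).
by apply: eq_bigr => i _; rewrite -!exprM mulnC.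
Qed.

Lemma Tr01 (x : F) : Tr2 x = 0 \/ Tr2 x = 1.
Proof.
have h : Tr2 x * (Tr2 x - 1) = 0 by rewrite mulrBr mulr1 -expr2 Tr_sqr subrr.
move/eqP: h; rewrite mulf_eq0 subr_eq0 => /orP[] /eqP; by [left|right].
Qed.
End Trace.
Lemma size_trpoly (R : fieldType) m :
  size (\sum_(i < m.+1) 'X^(2 ^ i) : {poly R}) = (2 ^ m).+1.
Proof.
elim: m => [|m IH]; first by rewrite big_ord1 expn0 size_polyXn.
rewrite big_ord_recr /= addrC size_polyDl size_polyXn // IH ltnS.
by rewrite ltn_exp2l.
Qed.

Section H90.
Variable F : finFieldType.
Hypothesis H2 : 2%N \in [pchar F].

Lemma Tr_h90 (c : F) : Tr2 c = 0 -> exists y, y ^+ 2 + y = c.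
Proof.
move=> Tc.
pose K := [set z : F | Tr2 z == 0].
pose g := fun y : F => y ^+ 2 + y.
pose I := g @: [set: F].
have sIK : I \subset K.
  by apply/subsetP => z /imsetP[y _ ->]; rewrite inE Tr_sqadd.
have hn := n_gt0 H2; have hc := cardF H2.
have [m hm] : exists m, logn 2 #|F| = m.+1.
  by move: hn; case: (logn 2 #|F|) => // m _; exists m.
rewrite hm in hc.
have cK : (#|K| <= 2 ^ m)%N.
  pose P := \sum_(i < m.+1) 'X^(2 ^ i) : {poly F}.
  have sP : size P = (2 ^ m).+1 by exact: size_trpoly.
  have P0 : P != 0 by rewrite -size_poly_eq0 sP.
  have := max_poly_roots P0 (rs := enum K).
  rewrite -cardE sP ltnS; apply; last exact: enum_uniq.
  apply/allP => z; rewrite mem_enum inE /root /P horner_sum.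
  rewrite /Tr2 hm => hz; rewrite (eq_bigr (fun i : 'I_m.+1 => z ^+ (2 ^ i))) // => i _; exact: hornerXn.
have cI : (2 ^ m.+1 <= #|I| * 2)%N.
  pose h := fun y : F => (g y, (enum_rank y < enum_rank (y + 1)%R)%N).
  have hinj : injective h.
    move=> y z [] e1 e2.
    have e3 : (y + z) * (y + z + 1) = g y + g z + 2%:R * (y * z).
      by rewrite /g; ring.
    rewrite e1 pcharf0 // mul0r addr0 addrr_pchar2 // in e3.
    move/eqP: e3; rewrite mulf_eq0 => /orP[|] /eqP e4.
      by apply/eqP; rewrite -subr_eq0 GRing.subr_pchar2 // e4.
    have ez : z = y + 1.
      by apply/eqP; rewrite -subr_eq0 GRing.subr_pchar2 // addrA [z + y]addrC e4.
    have ey : z + 1 = y by rewrite ez -addrA addrr_pchar2 // addr0.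
    rewrite ey -ez in e2.
    have nyz : enum_rank y != enum_rank z.
      apply/eqP => /enum_rank_inj eyz; move: ez; rewrite eyz => /eqP.
      by rewrite -subr_eq0 opprD addrA subrr add0r oppr_eq0 oner_eq0.
    exfalso; move: e2 nyz; case: ltngtP => // e _ /eqP; apply; exact: val_inj.
  rewrite -hc -cardsT -(card_imset _ hinj).
  have -> : (#|I| * 2)%N = #|setX I [set: bool]| by rewrite cardsX cardsT card_bool.
  apply: subset_leq_card; apply/subsetP => p /imsetP[y _ ->].
  by rewrite inE /= imset_f // inE.
have cIK : (#|K| <= #|I|)%N.
  apply: (leq_trans cK); move: cI; rewrite expnS [(#|I| * 2)%N]mulnC leq_pmul2l //.
have /eqP eIK : I == K by rewrite -(subset_leqif_cards sIK) eqn_leq cIK subset_leq_card.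
have : c \in K by rewrite inE Tc.
by rewrite -eIK => /imsetP[y _ ->]; exists y.
Qed.
End H90.
Section Cubic.
Variable F : finFieldType.
Hypothesis H2 : 2%N \in [pchar F].

Definition Rt (a b : F) := [set s : F | s ^+ 3 + a * s + b == 0].

Lemma two0 : (2%:R : F) = 0.
Proof. exact: pcharf0 H2. Qed.

Lemma root_facts a b s : b != 0 -> s \in Rt a b ->
  [/\ b = s ^+ 3 + a * s, s != 0 & s ^+ 2 + a != 0].
Proof.
move=> b0; rewrite inE => /eqP e.
have eb : b = s ^+ 3 + a * s.
  by apply/eqP; rewrite -subr_eq0 GRing.subr_pchar2 // addrC e.
split => //.
  by apply: contra b0 => /eqP s0; rewrite eb s0 expr0n mulr0 addr0.
apply: contra b0 => /eqP u0.
rewrite eb; have -> : s ^+ 3 + a * s = s * (s ^+ 2 + a) by ring.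
by rewrite u0 mulr0.
Qed.

Lemma key2 a b s : b != 0 -> s \in Rt a b ->
  Tr2 (1 + a ^+ 3 / b ^+ 2) = Tr2 (1 + a / s ^+ 2).
Proof.
move=> b0 sR; have [eb s0 u0] := root_facts b0 sR.
pose u := s ^+ 2 + a.
have e : a ^+ 3 / b ^+ 2 = a / s ^+ 2 + ((s ^+ 2 / u) ^+ 2 + s ^+ 2 / u)
     - 2%:R * ((a * s ^+ 2 + a ^+ 2 + s ^+ 4) / u ^+ 2).
  rewrite eb /u; field.
  by rewrite s0 u0 -eb b0.
by rewrite e two0 mul0r subr0 addrA (TrD H2) (Tr_sqadd H2) addr0.
Qed.

Lemma other_root a b s r : s \in Rt a b -> r \in Rt a b -> r != s ->
  r ^+ 2 + r * s + s ^+ 2 + a = 0.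
Proof.
rewrite !inE => /eqP es /eqP er rs.
have : (r - s) * (r ^+ 2 + r * s + s ^+ 2 + a) = 0.
  by rewrite -[RHS](subrr 0) -{1}er -es; ring.
by move/eqP; rewrite mulf_eq0 subr_eq0 (negPf rs) => /eqP.
Qed.

Lemma key a b s : b != 0 -> s \in Rt a b ->
  (#|Rt a b| == 1%N) = (Tr2 (1 + a / s ^+ 2) == 1).
Proof.
move=> b0 sR; have [eb s0 u0] := root_facts b0 sR.
apply/idP/idP.
  move=> /cards1P [x ex].
  case: (Tr01 H2 (1 + a / s ^+ 2)) => [T0|->//].
  have [y hy] := Tr_h90 H2 T0.
  pose r := s * y.
  have q0 : r ^+ 2 + r * s + s ^+ 2 + a = 0.
    have -> : r ^+ 2 + r * s + s ^+ 2 + a = s ^+ 2 * ((y ^+ 2 + y) + (1 + a / s ^+ 2)).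
      by rewrite /r; field.
    by rewrite hy addrr_pchar2 // mulr0.
  have rR : r \in Rt a b.
    rewrite inE; apply/eqP.
    have -> : r ^+ 3 + a * r + b = (r - s) * (r ^+ 2 + r * s + s ^+ 2 + a) + (s ^+ 3 + a * s + b).
      by ring.
    by rewrite q0 mulr0 add0r; move: sR; rewrite inE => /eqP.
  have rs : r != s.
    apply/eqP => ers.
    have y1 : y = 1 by apply: (mulfI s0); rewrite -/r ers mulr1.
    move: hy; rewrite y1 expr1n addrr_pchar2 // => /esym/eqP.
    rewrite addr_eq0 => /eqP ha.
    have : a = s ^+ 2.
      by rewrite GRing.oppr_pchar2 // in ha; rewrite -[a](divfK (expf_neq0 2 s0)) -ha mul1r.
    by move=> ea; move: u0; rewrite ea addrr_pchar2 // eqxx.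
  exfalso; move: sR rR; rewrite ex !inE => /eqP es /eqP er.
  by rewrite er es eqxx in rs.
move=> T1; apply/cards1P; exists s; apply/setP => r; rewrite inE.
apply/idP/idP; last by move/eqP ->.
move=> rR; apply/negPn/negP => rs.
have q0 := other_root sR rR rs.
pose y := r / s.
have : y ^+ 2 + y + (1 + a / s ^+ 2) = 0.
  have -> : y ^+ 2 + y + (1 + a / s ^+ 2) = (r ^+ 2 + r * s + s ^+ 2 + a) / s ^+ 2.
    by rewrite /y; field.
  by rewrite q0 mul0r.
move/eqP; rewrite addr_eq0 GRing.oppr_pchar2 // => /eqP hy.
by move: T1; rewrite -hy (Tr_sqadd H2) eq_sym oner_eq0.
Qed.

Lemma crit a bb : bb != 0 ->
  (#|Rt a bb| == 1%N) = (Tr2 (1 + a ^+ 3 / bb ^+ 2) == 1).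
Proof.
pose S1 := [set b : F | (b != 0) && (#|Rt a b| == 1%N)].
pose T := [set b : F | (b != 0) && (Tr2 (1 + a ^+ 3 / b ^+ 2) == 1)].
pose A := [set s : F | (s ^+ 3 + a * s != 0) && (Tr2 (1 + a / s ^+ 2) == 1)].
have sST : S1 \subset T.
  apply/subsetP => b; rewrite !inE => /andP[b0 c1]; rewrite b0 /=.
  move/cards1P: (c1) => [x ex].
  have xR : x \in Rt a b by rewrite ex set11.
  by rewrite (key2 b0 xR) -(key b0 xR).
have cAS : (#|A| <= #|S1|)%N.
  pose phi := fun s : F => s ^+ 3 + a * s.
  have inR : forall s, s ^+ 3 + a * s != 0 -> s \in Rt a (phi s).
    by move=> s _; rewrite inE addrr_pchar2.
  have phiI : {in A &, injective phi}.
    move=> s1 s2; rewrite !inE => /andP[n1 t1] /andP[n2 t2] e.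
    have r1 := inR _ n1; have r2 := inR _ n2; rewrite -e in r2.
    have := key n1 r1; rewrite t1 => /cards1P[x ex].
    by move: r1 r2; rewrite ex !inE => /eqP -> /eqP ->.
  rewrite -(card_in_imset phiI); apply: subset_leq_card.
  apply/subsetP => b /imsetP[s]; rewrite inE => /andP[n1 t1] ->.
  by rewrite inE n1 /= (key n1 (inR _ n1)).
have cTA : (#|T| <= #|A|)%N.
  pose k : F := if a == 0 then 1 else a^-1.
  have k0 : k != 0 by rewrite /k; case: ifP => [_|/negbT a0]; rewrite ?oner_eq0 ?invr_eq0.
  pose psi := fun b : F => b * k.
  have psiI : injective psi by apply: mulIf.
  rewrite -(card_imset _ psiI); apply: subset_leq_card.
  apply/subsetP => s /imsetP[b]; rewrite inE => /andP[b0 t1] ->.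
  rewrite inE /psi /k; case: ifP => [/eqP a0|/negbT a0].
    rewrite a0 mulr1 mul0r addr0 expf_neq0 //=.
    by move: t1; rewrite a0 expr0n /= !mul0r.
  have e : a / (b * a^-1) ^+ 2 = a ^+ 3 / b ^+ 2 by field; rewrite b0 a0.
  rewrite e t1 andbT.
  have -> : (b * a^-1) ^+ 3 + a * (b * a^-1) = (b * a^-1) * ((b * a^-1) ^+ 2 + a) by ring.
  rewrite mulf_neq0 // ?mulf_neq0 ?invr_eq0 //.
  apply/negP => /eqP u0.
  have ha : a / (b * a^-1) ^+ 2 = 1.
    have sa : (b * a^-1) ^+ 2 = a.
      by apply/eqP; rewrite -subr_eq0 GRing.subr_pchar2 // u0.
    by rewrite sa divff.
  by move: t1; rewrite -e ha addrr_pchar2 // (@Tr0 F) eq_sym oner_eq0.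
have /eqP eST : S1 == T.
  by rewrite -(subset_leqif_cards sST) eqn_leq subset_leq_card // (leq_trans cTA cAS).
move=> b0.
have : (bb \in S1) = (bb \in T) by rewrite eST.
by rewrite !inE b0.
Qed.
End Cubic.

Section Main.
Variable F : finFieldType.
Hypothesis H2 : 2%N \in [pchar F].

Lemma two0' : (2%:R : F) = 0.
Proof. exact: pcharf0 H2. Qed.

Lemma zero_case (mu : F) : mu != 0 ->
  #|[set t : F | t ^+ 3 + 0 * t ^+ 2 + mu * t + 0 == 0]| != 1%N.
Proof.
move=> m0; apply/negP => /cards1P [x ex].
have [m hm] : exists m, logn 2 #|F| = m.+1.
  by move: (n_gt0 H2); case: (logn 2 #|F|) => // m _; exists m.
have hc := cardF H2; rewrite hm in hc.
pose r := mu ^+ (2 ^ m).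
have r2 : r ^+ 2 = mu by rewrite /r -exprM -expnSr -hc expf_card.
have r0 : r != 0 by rewrite expf_neq0.
have : 0 \in [set t : F | t ^+ 3 + 0 * t ^+ 2 + mu * t + 0 == 0].
  by rewrite inE expr0n mul0r !mulr0 !addr0.
have : r \in [set t : F | t ^+ 3 + 0 * t ^+ 2 + mu * t + 0 == 0].
  rewrite inE mul0r !addr0; apply/eqP.
  have -> : r ^+ 3 + mu * r = r * (r ^+ 2 + mu) by ring.
  by rewrite r2 addrr_pchar2 // mulr0.
rewrite ex !inE => /eqP e1 /eqP e2.
by move: r0; rewrite e1 e2 eqxx.
Qed.

Lemma m1_neq0 (mu : F) : mu != 1 -> mu + 1 != 0.
Proof.
move=> m1; apply: contra m1 => /eqP h.
by rewrite -subr_eq0 GRing.subr_pchar2 // h.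
Qed.

Lemma part1 (mu g : F) : mu != 0 -> mu != 1 -> g != 0 ->
  (#|[set t : F | t ^+ 3 + g * t ^+ 2 + mu * t + g == 0]| == 1%N) =
  (Tr2 (delta mu g) == 1).
Proof.
move=> m0 m1 g0; have mm := m1_neq0 m1.
pose a := g ^+ 2 + mu; pose b := g * (mu + 1).
have b0 : b != 0 by rewrite mulf_neq0.
rewrite -(card_preimset _ (addIr g)).
have -> : (fun s => s + g) @^-1: [set t : F | t ^+ 3 + g * t ^+ 2 + mu * t + g == 0]
   = Rt a b.
  apply/setP => s; rewrite !inE.
  have -> : (s + g) ^+ 3 + g * (s + g) ^+ 2 + mu * (s + g) + g
     = s ^+ 3 + a * s + b + 2%:R * (2%:R * s ^+ 2 * g + 2%:R * s * g ^+ 2 + g ^+ 3).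
    by rewrite /a /b; ring.
  by rewrite two0' mul0r addr0.
rewrite (crit H2 a b0); congr (_ == 1).
pose z := (g ^+ 2 + 1) / (mu + 1).
have e : delta mu g = 1 + a ^+ 3 / b ^+ 2 + (z ^+ 2 + z)
   + 2%:R * (- (g ^+ 2 + g ^+ 4 + g ^+ 6 + mu * g ^+ 2 + 2%:R * mu * g ^+ 4
        + 2%:R * mu ^+ 2 * g ^+ 2) / (g ^+ 2 * (mu + 1) ^+ 2)).
  by rewrite /delta /a /b /z; field; rewrite g0 mm.
by rewrite e two0' mul0r addr0 [in RHS](TrD H2) (Tr_sqadd H2) addr0.
Qed.

Lemma part2 (mu c : F) : mu != 0 -> mu != 1 -> c != 0 ->
  (#|[set t : F | t ^+ 3 + c * t ^+ 2 + t + mu * c == 0]| == 1%N) =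
  (Tr2 (deltat mu c) == 1).
Proof.
move=> m0 m1 c0; have mm := m1_neq0 m1.
pose a := c ^+ 2 + 1; pose b := c * (mu + 1).
have b0 : b != 0 by rewrite mulf_neq0.
rewrite -(card_preimset _ (addIr c)).
have -> : (fun s => s + c) @^-1: [set t : F | t ^+ 3 + c * t ^+ 2 + t + mu * c == 0]
   = Rt a b.
  apply/setP => s; rewrite !inE.
  have -> : (s + c) ^+ 3 + c * (s + c) ^+ 2 + (s + c) + mu * c
     = s ^+ 3 + a * s + b + 2%:R * (2%:R * s ^+ 2 * c + 2%:R * s * c ^+ 2 + c ^+ 3).
    by rewrite /a /b; ring.
  by rewrite two0' mul0r addr0.
rewrite (crit H2 a b0); congr (_ == 1).
pose z := (c ^+ 2 + 1) / (mu + 1).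
have e : deltat mu c = 1 + a ^+ 3 / b ^+ 2 + (z ^+ 2 + z)
   + 2%:R * (- (3%:R * c ^+ 2 + 3%:R * c ^+ 4 + c ^+ 6 + mu * c ^+ 2)
        / (c ^+ 2 * (mu + 1) ^+ 2)).
  by rewrite /deltat /a /b /z; field; rewrite c0 mm.
by rewrite e two0' mul0r addr0 [in RHS](TrD H2) (Tr_sqadd H2) addr0.
Qed.
End Main.

Theorem lemma6p4 (F : finFieldType) (mu : F) :
  2%N \in [pchar F] -> mu != 0 -> mu != 1 ->
  N1 mu = #|[set gamma : F | (gamma != 0) && (Tr2 (delta mu gamma) == 1)]| /\
  N1t mu = #|[set c : F | (c != 0) && (Tr2 (deltat mu c) == 1)]|.
Proof.
move=> H2 m0 m1; split.
  rewrite /N1; apply: eq_card => g; rewrite !inE.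
  have [->|g0] := eqVneq g 0; first by rewrite (negPf (zero_case H2 m0)).
  by rewrite (part1 H2 m0 m1 g0).
rewrite /N1t; apply: eq_card => c; rewrite !inE.
have [->|c0] := eqVneq c 0; first by [].
by rewrite (part2 H2 m0 m1 c0).
Qed.
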